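(* Let $R$ be a commutative ring with $1\neq 0$, $S\subseteq R$ a multiplicatively closed subset, and $M$ a distributive $R$-module. If $N$ and $K$ are $S$-copure submodules of $M$, then $N\cap K$ is an $S$-copure submodule of $M$.
   Context: All rings are commutative with $1\neq 0$ and all modules are unital. A multiplicatively closed subset (m.c.s.) $S$ of $R$ is a subset with $0\notin S$, $1\in S$, and $ss'\in S$ for all $s,s'\in S$. $M$ is distributive if its lattice of submodules is distributive, i.e., $A\cap(B+C)=(A\cap B)+(A\cap C)$ for all submodules $A,B,C$. For an ideal $I$ and submodule $L$, $(L:_M I)=\{m\in M: Im\subseteq L\}$ and $(0:_M I)=\{m\in M: Im=0\}$. A submodule $L$ of $M$ is $S$-copure if there exists $s\in S$ such that $s(L:_M I)\subseteq L+(0:_M I)$ for every ideal $I$ of $R$. *)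

(* Defs.v *)
From HB Require Import structures.
From mathcomp Require Import all_boot all_order all_algebra.
Set Implicit Arguments. Unset Strict Implicit. Unset Printing Implicit Defensive.
Import GRing.Theory.
Local Open Scope ring_scope.

Definition is_submodule (R : comNzRingType) (M : lmodType R) (L : M -> Prop) : Prop :=
  [/\ L 0, (forall x y, L x -> L y -> L (x + y)) & (forall (r : R) x, L x -> L (r *: x))].

Definition is_ideal (R : comNzRingType) (I : R -> Prop) : Prop :=
  [/\ I 0, (forall x y, I x -> I y -> I (x + y)) & (forall r x, I x -> I (r * x))].

Definition is_mcs (R : comNzRingType) (S : R -> Prop) : Prop :=
  [/\ ~ S 0, S 1 & (forall s t, S s -> S t -> S (s * t))].

Definition sub_inter (R : comNzRingType) (M : lmodType R) (A B : M -> Prop) : M -> Prop :=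
  fun m => A m /\ B m.

Definition sub_sum (R : comNzRingType) (M : lmodType R) (A B : M -> Prop) : M -> Prop :=
  fun m => exists a b, [/\ A a, B b & m = a + b].

Definition colon (R : comNzRingType) (M : lmodType R) (L : M -> Prop) (I : R -> Prop) : M -> Prop :=
  fun m => forall r, I r -> L (r *: m).

Definition annM (R : comNzRingType) (M : lmodType R) (I : R -> Prop) : M -> Prop :=
  fun m => forall r, I r -> r *: m = 0.

Definition distributive_module (R : comNzRingType) (M : lmodType R) : Prop :=
  forall A B C : M -> Prop, is_submodule A -> is_submodule B -> is_submodule C ->
    forall m, sub_inter A (sub_sum B C) m <-> sub_sum (sub_inter A B) (sub_inter A C) m.

Definition S_copure (R : comNzRingType) (M : lmodType R) (S : R -> Prop) (L : M -> Prop) : Prop :=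
  exists s, S s /\ forall I : R -> Prop, is_ideal I ->
    forall m, colon L I m -> sub_sum L (annM I) (s *: m).

(* Main.v *)
Require Import Defs.
From HB Require Import structures.
From mathcomp Require Import all_boot all_order all_algebra.
Import GRing.Theory.
Local Open Scope ring_scope.

Lemma annM_sub (R : comNzRingType) (M : lmodType R) (I : R -> Prop) :
  is_submodule (annM (M:=M) I).
Proof.
split.
- by move=> r _; rewrite scaler0.
- by move=> x y hx hy r hr; rewrite scalerDr hx // hy // addr0.
- by move=> a x hx r hr; rewrite scalerA mulrC -scalerA hx // scaler0.
Qed.

Lemma sum_sub (R : comNzRingType) (M : lmodType R) (A B : M -> Prop) :
  is_submodule A -> is_submodule B -> is_submodule (sub_sum A B).
Proof.
case=> A0 AD AZ [B0 BD BZ]; split.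
- by exists 0, 0; split => //; rewrite addr0.
- move=> x y [a [b [ha hb ->]]] [a' [b' [ha' hb' ->]]].
  exists (a + a'), (b + b'); split; auto.
  by rewrite addrACA.
- move=> r x [a [b [ha hb ->]]]; exists (r *: a), (r *: b); split; auto.
  by rewrite scalerDr.
Qed.

Theorem theorem3p5 (R : comNzRingType) (M : lmodType R) (S : R -> Prop)
  (N K : M -> Prop) :
  is_mcs S -> distributive_module M ->
  is_submodule N -> is_submodule K ->
  S_copure S N -> S_copure S K ->
  is_submodule (sub_inter N K) /\ S_copure S (sub_inter N K).
Proof.
move=> [_ _ Smul] Hd HN HK [s1 [Hs1 C1]] [s2 [Hs2 C2]].
have HN' := HN; have HK' := HK.
case: HN => N0 ND NZ; case: HK => K0 KD KZ.
split.
  split; first by split.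
  - by move=> x y [] ? ? [] ? ?; split; auto.
  - by move=> r x [] ? ?; split; auto.
exists (s1 * s2); split; first by apply: Smul.
move=> I HI m Hm.
have HA := @annM_sub R M I.
case: (HA) => A0 AD AZ.
have hN : colon N I m by move=> r /Hm [].
have hK : colon K I m by move=> r /Hm [].
have x1 : sub_sum N (annM I) ((s1 * s2) *: m).
  have [n [a [hn ha e]]] := C1 I HI m hN.
  exists (s2 *: n), (s2 *: a); split; auto.
  by rewrite mulrC -scalerA e scalerDr.
have x2 : sub_sum K (annM I) ((s1 * s2) *: m).
  have [n [a [hn ha e]]] := C2 I HI m hK.
  exists (s1 *: n), (s1 *: a); split; auto.
  by rewrite -scalerA e scalerDr.
have HNA := @sum_sub R M _ _ HN' HA.
have [y [z [[hy1 hy2] [hz1 hz2] ->]]] :=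
  (proj1 (Hd _ _ _ HNA HK' HA ((s1 * s2) *: m)) (conj x1 x2)).
have [u [v [[hu1 hu2] [hv1 hv2] ->]]] :=
  (proj1 (Hd _ _ _ HK' HN' HA y) (conj hy2 hy1)).
exists u, (v + z); split; auto.
  by split.
by rewrite addrA.
Qed.
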